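(* Let $\mathfrak g$ be an almost abelian Lie algebra of real dimension $2n$ with a Hermitian structure $(J,g)$. Then there exists a unitary coframe $\varphi_1,\dots,\varphi_n$ of $(1,0)$-forms, a real number $\lambda$, a vector $v=(v_2,\dots,v_n)^t\in\mathbb C^{n-1}$ and a matrix $A=(A_{ij})_{2\le i,j\le n}\in M_{n-1}(\mathbb C)$ such that $$d\varphi_1=-\lambda\,\varphi_1\wedge\bar\varphi_1,\qquad d\varphi_i=-\bar v_i\,\varphi_1\wedge\bar\varphi_1+\sum_{j=2}^n\overline{A_{ij}}\,(\varphi_1+\bar\varphi_1)\wedge\varphi_j,\quad 2\le i\le n.$$
   Context: A Hermitian structure on a real Lie algebra $\mathfrak g$ is an integrable almost complex structure $J$ (i.e. $[x,y]-[Jx,Jy]+J[Jx,y]+J[x,Jy]=0$) together with a $J$-invariant inner product $g$. $\mathfrak g^{1,0}=\{x-\sqrt{-1}Jx\}$; $g$ is extended complex-bilinearly; a unitary coframe is the dual of a basis $e_1,\dots,e_n$ of $\mathfrak g^{1,0}$ with $g(e_i,\bar e_j)=\delta_{ij}$. $d$ is the Chevalley–Eilenberg differential ($d\alpha(x,y)=-\alpha([x,y])$). $\mathfrak g$ is almost abelian if it is non-abelian and contains an abelian ideal of codimension one. *)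

(* Defs.v *)
From HB Require Import structures.
From mathcomp Require Import all_boot all_order all_algebra.
From mathcomp Require Import reals.
From mathcomp Require Import complex.
Set Implicit Arguments. Unset Strict Implicit. Unset Printing Implicit Defensive.
Import Order.TTheory GRing.Theory Num.Theory.
Local Open Scope ring_scope.
Local Open Scope complex_scope.

(* A real Lie algebra of dimension d is modelled (after choosing a basis) on
   the real vector space 'rV[R]_d with a bracket [br]. *)
Section Defs.
Variable R : realType.
Variable d : nat.
Local Notation V := 'rV[R]_d.
Local Notation C := R[i].

Definition is_lie_bracket (br : V -> V -> V) : Prop :=
  [/\ (forall (a : R) (x y z : V), br (a *: x + y) z = a *: br x z + br y z),
      (forall x y : V, br x y = - br y x) &
      (forall x y z : V, br x (br y z) + br y (br z x) + br z (br x y) = 0)].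

(* almost abelian: non-abelian, with an abelian ideal of codimension one
   (the ideal is the row space of the matrix H). *)
Definition almost_abelian (br : V -> V -> V) : Prop :=
  (exists x y : V, br x y != 0) /\
  exists H : 'M[R]_d,
    [/\ \rank H = (d - 1)%N,
        (forall x y : V, (x <= H)%MS -> (br x y <= H)%MS) &
        (forall x y : V, (x <= H)%MS -> (y <= H)%MS -> br x y = 0)].

Definition integrable_acs (br : V -> V -> V) (J : 'M[R]_d) : Prop :=
  J *m J = - 1%:M /\
  forall x y : V,
    br x y - br (x *m J) (y *m J) + br (x *m J) y *m J + br x (y *m J) *m J = 0.

Definition ip (G : 'M[R]_d) (x y : V) : R := (x *m G *m y^T) 0 0.

Definition hermitian_structure (br : V -> V -> V) (J : 'M[R]_d) (G : 'M[R]_d)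
  : Prop :=
  [/\ integrable_acs br J,
      G^T = G,
      (forall x : V, x != 0 -> 0 < ip G x x) &
      (forall x y : V, ip G (x *m J) (y *m J) = ip G x y)].

(* Complex-valued (real-linear) 1-forms on g, i.e. complex 1-forms on g_C,
   given by their values phi k 0 on the standard basis vectors. *)
Definition evf (phi : 'cV[C]_d) (x : V) : C := \sum_k (x 0 k)%:C * phi k 0.

Definition conjf (phi : 'cV[C]_d) : 'cV[C]_d := map_mx (@conjc R) phi.

(* (1,0)-form: vanishes on g^{0,1} = {x + i Jx}, i.e. phi(Jx) = i phi(x) *)
Definition is10 (J : 'M[R]_d) (phi : 'cV[C]_d) : Prop :=
  forall x : V, evf phi (x *m J) = 'i * evf phi x.

(* complexified vectors a + i b, written as pairs (a,b) *)
Definition evfC (phi : 'cV[C]_d) (ab : V * V) : C :=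
  evf phi ab.1 + 'i * evf phi ab.2.

(* complex-bilinear extension of g *)
Definition ipC (G : 'M[R]_d) (u w : V * V) : C :=
  (ip G u.1 w.1 - ip G u.2 w.2) +i* (ip G u.1 w.2 + ip G u.2 w.1).

(* e = x - i Jx in g^{1,0} and its conjugate *)
Definition vec10 (J : 'M[R]_d) (x : V) : V * V := (x, - (x *m J)).
Definition vec01 (J : 'M[R]_d) (x : V) : V * V := (x, x *m J).

(* phi_1..phi_n is a unitary coframe: the dual basis of a basis e_1..e_n of
   g^{1,0} with g(e_i, conj e_j) = delta_ij (orthonormality forces the e_j to
   form a basis of the n-dimensional space g^{1,0}). *)
Definition unitary_coframe (n : nat) (J G : 'M[R]_d) (phi : 'I_n -> 'cV[C]_d)
  : Prop :=
  (forall i, is10 J (phi i)) /\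
  exists X : 'I_n -> V,
    (forall i j, ipC G (vec10 J (X i)) (vec01 J (X j)) = (i == j)%:R) /\
    (forall i j, evfC (phi i) (vec10 J (X j)) = (i == j)%:R).

Definition wedge (a b : 'cV[C]_d) (x y : V) : C :=
  evf a x * evf b y - evf a y * evf b x.

Definition dform (br : V -> V -> V) (phi : 'cV[C]_d) (x y : V) : C :=
  - evf phi (br x y).

End Defs.

(* Main.v *)
Require Import Defs.
From HB Require Import structures.
From mathcomp Require Import all_boot all_order all_algebra.
From mathcomp Require Import reals.
From mathcomp Require Import complex.
From mathcomp Require Import ring lra.
Import Order.TTheory GRing.Theory Num.Theory.
Local Open Scope ring_scope.
Local Open Scope complex_scope.

Section T.
Lemma ipDl (R : realType) d (G : 'M[R]_d) x y z :
  ip G (x + y) z = ip G x z + ip G y z.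
Proof. by rewrite /ip !mulmxDl mxE. Qed.
Lemma ipZl (R : realType) d (G : 'M[R]_d) a x z :
  ip G (a *: x) z = a * ip G x z.
Proof. by rewrite /ip -!scalemxAl mxE. Qed.
Lemma ipNl (R : realType) d (G : 'M[R]_d) x z :
  ip G (- x) z = - ip G x z.
Proof. by rewrite -scaleN1r ipZl mulN1r. Qed.
Lemma ip0l (R : realType) d (G : 'M[R]_d) z : ip G 0 z = 0.
Proof. by rewrite /ip !mul0mx mxE. Qed.
Lemma ip_sym (R : realType) d (G : 'M[R]_d) x y : G^T = G -> ip G x y = ip G y x.
Proof.
move=> sG; rewrite /ip.
have -> : (x *m G *m y^T) 0 0 = ((x *m G *m y^T)^T) 0 0 by rewrite [RHS]mxE.
rewrite !trmx_mul trmxK sG mulmxA. done.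
Qed.
Lemma ipsum (R : realType) d (G : 'M[R]_d) m (f : 'I_m -> 'rV[R]_d) z :
  ip G (\sum_j f j) z = \sum_j ip G (f j) z.
Proof. by rewrite /ip !mulmx_suml summxE. Qed.
End T.

Section Main.
Variable R : realType.
Variable n : nat.
Local Notation V := 'rV[R]_(n.*2).
Variable br : V -> V -> V.
Variables J G H : 'M[R]_(n.*2).
Hypothesis brL : forall (a : R) (x y z : V), br (a *: x + y) z = a *: br x z + br y z.
Hypothesis brA : forall x y : V, br x y = - br y x.
Hypothesis JJ : J *m J = - 1%:M.
Hypothesis NJ : forall x y : V,
    br x y - br (x *m J) (y *m J) + br (x *m J) y *m J + br x (y *m J) *m J = 0.
Hypothesis Gs : G^T = G.
Hypothesis Gpos : forall x : V, x != 0 -> 0 < ip G x x.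
Hypothesis GJ : forall x y : V, ip G (x *m J) (y *m J) = ip G x y.
Hypothesis Hrank : \rank H = (n.*2 - 1)%N.
Hypothesis Hid : forall x y : V, (x <= H)%MS -> (br x y <= H)%MS.
Hypothesis Hab : forall x y : V, (x <= H)%MS -> (y <= H)%MS -> br x y = 0.

Local Notation g := (ip G).

Lemma brD x y z : br (x + y) z = br x z + br y z.
Proof. by have := brL 1 x y z; rewrite !scale1r. Qed.
Lemma brZ a x z : br (a *: x) z = a *: br x z.
Proof.
have h0 : br 0 z = 0.
  have h := brL 1 0 0 z; rewrite scale1r addr0 scale1r in h.
  by apply: (addrI (br 0 z)); rewrite addr0 -h.
by have := brL a x 0 z; rewrite addr0 h0 addr0.
Qed.
Lemma br0 z : br 0 z = 0.
Proof. by have := brZ 0 0 z; rewrite !scale0r. Qed.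
Lemma brDr x y z : br z (x + y) = br z x + br z y.
Proof. by rewrite brA brD opprD -!brA. Qed.
Lemma brZr a x z : br z (a *: x) = a *: br z x.
Proof. by rewrite brA brZ -scalerN -brA. Qed.
Lemma brNr x z : br z (- x) = - br z x.
Proof. by rewrite -scaleN1r brZr scaleN1r. Qed.
Lemma brBr x y z : br z (x - y) = br z x - br z y.
Proof. by rewrite brDr brNr. Qed.
Lemma brNl x z : br (- x) z = - br x z.
Proof. by rewrite -scaleN1r brZ scaleN1r. Qed.
Lemma brBl x y z : br (x - y) z = br x z - br y z.
Proof. by rewrite brD brNl. Qed.
Lemma brxx x : br x x = 0.
Proof.
have h := brA x x. have : (2%:R : R) *: br x x = 0 by rewrite scaler_nat mulr2n {1}h addNr.
by move/eqP; rewrite scaler_eq0 pnatr_eq0 /= => /eqP.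
Qed.
Lemma br_sumr m (f : 'I_m -> V) z : br z (\sum_j f j) = \sum_j br z (f j).
Proof.
elim/big_rec2: _ => [|j y1 y2 _ <-]; last by rewrite brDr.
by rewrite brA br0 oppr0.
Qed.

Lemma JJx (x : V) : x *m J *m J = - x.
Proof. by rewrite -mulmxA JJ mulmxN mulmx1. Qed.
Lemma gC x y : g x y = g y x. Proof. exact: ip_sym. Qed.
Lemma gDr x y z : g z (x + y) = g z x + g z y.
Proof. by rewrite gC ipDl !(gC z). Qed.
Lemma gZr a x z : g z (a *: x) = a * g z x.
Proof. by rewrite gC ipZl (gC z). Qed.
Lemma gNr x z : g z (- x) = - g z x.
Proof. by rewrite gC ipNl (gC z). Qed.
Lemma gJl x y : g (x *m J) y = - g x (y *m J).
Proof. by rewrite -GJ JJx ipNl. Qed.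
Lemma gJr x y : g x (y *m J) = - g (x *m J) y.
Proof. by rewrite gJl opprK. Qed.
Lemma gxJx x : g x (x *m J) = 0.
Proof.
have h := gJl x x; rewrite gC in h.
have : (2%:R : R) * g x (x *m J) = 0 by rewrite mulr2n mulrDl mul1r {1}h addNr.
by move/eqP; rewrite mulf_eq0 pnatr_eq0 /= => /eqP.
Qed.

Lemma mx11 (A B : 'M[R]_1) : A 0 0 = B 0 0 -> A = B.
Proof. by move=> h; apply/matrixP => a b; rewrite !ord1. Qed.

Lemma gmx (z y : V) : z *m (G *m y^T) = (g z y)%:M.
Proof. by apply: mx11; rewrite mulmxA [RHS]mxE eqxx mulr1n. Qed.

Lemma ker_nz m (M : 'M[R]_(n.*2, m)) : (\rank M < n.*2)%N ->
  exists y : V, y != 0 /\ y *m M = 0.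
Proof.
move=> hm.
have : \rank (kermx M) != 0%N by rewrite mxrank_ker subn_eq0 -ltnNge.
rewrite mxrank_eq0 => Knz.
case: (pickP (fun r => row r (kermx M) != 0)) => [r hr|h].
  by exists (row r (kermx M)); split => //; rewrite -row_mul mulmx_ker row0.
exfalso; move/eqP: Knz; apply; apply/row_matrixP => r.
by have := h r; rewrite /= row0 => /negbFE/eqP.
Qed.

Lemma normal_vec : (0 < n)%N -> exists X0 : V,
  [/\ g X0 X0 = 2^-1, forall z, (z <= H)%MS -> g z X0 = 0
    & forall z, g z X0 = 0 -> (z <= H)%MS].
Proof.
move=> n0.
have [y [ynz hy]] : exists y : V, y != 0 /\ y *m (G *m H^T) = 0.
  apply: ker_nz; apply: (leq_ltn_trans (mxrankM_maxr _ _)).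
  by rewrite mxrank_tr Hrank; rewrite -addnn; case: n n0 => // k _; rewrite addSn subn1 /=.
have gy0 : forall z, (z <= H)%MS -> g z y = 0.
  move=> z /submxP [w ->]; rewrite gC /ip trmx_mul !mulmxA -(mulmxA y) hy.
  by rewrite !mul0mx mxE.
have ypos := Gpos _ ynz.
set s := Num.sqrt (2 * g y y).
have s0 : 0 < s by rewrite sqrtr_gt0 mulr_gt0.
have s2 : s ^+ 2 = 2 * g y y by rewrite sqr_sqrtr // mulr_ge0 // ltW.
set X0 := s^-1 *: y.
have gXX : g X0 X0 = 2^-1.
  rewrite /X0 ipZl gZr mulrA -expr2 exprVn s2.
  by field; rewrite lt0r_neq0.
have gX0 : forall z, (z <= H)%MS -> g z X0 = 0 by move=> z /gy0 h; rewrite gZr h mulr0.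
exists X0; split => //.
set K := kermx (G *m X0^T).
have sHK : (H <= K)%MS.
  apply/sub_kermxP; apply/row_matrixP => i; rewrite row_mul row0 gmx gX0 ?row_sub //.
  by apply/matrixP => a b; rewrite !mxE mul0rn.
have GX : G *m X0^T != 0.
  apply/negP => /eqP h0; have := gmx X0 X0; rewrite h0 mulmx0 gXX => /(congr1 (fun M : 'M[R]_1 => M 0 0)).
  rewrite !mxE /= => /eqP; by rewrite eq_sym invr_eq0 pnatr_eq0.
have rK : \rank K = (n.*2 - 1)%N.
  rewrite mxrank_ker; congr (_ - _)%N; apply/eqP; rewrite eqn_leq rank_leq_col /= lt0n mxrank_eq0 //.
have := (mxrank_leqif_eq sHK).2; rewrite Hrank rK eqxx => /esym /andP [_ sKH].
move=> z hz; apply: submx_trans sKH; apply/sub_kermxP; rewrite gmx hz.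
by apply/matrixP => a b; rewrite !mxE mul0rn.
Qed.

Lemma normalize (y : V) : y != 0 -> exists c : R, g (c *: y) (c *: y) = 2^-1.
Proof.
move=> ynz; have ypos := Gpos _ ynz.
set s := Num.sqrt (2 * g y y).
have s0 : 0 < s by rewrite sqrtr_gt0 mulr_gt0.
have s2 : s ^+ 2 = 2 * g y y by rewrite sqr_sqrtr // mulr_ge0 // ltW.
exists s^-1; rewrite ipZl gZr mulrA -expr2 exprVn s2.
by field; rewrite lt0r_neq0.
Qed.

Definition onb (s : seq V) := forall i j, (i < size s)%N -> (j < size s)%N ->
  g (nth 0 s i) (nth 0 s j) = (i == j)%:R / 2 /\ g (nth 0 s i) (nth 0 s j *m J) = 0.

Lemma onb_ext s : onb s -> (size s < n)%N -> exists x, onb (rcons s x).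
Proof.
move=> os ss.
set t := s ++ map (fun x => x *m J) s.
set M : 'M[R]_(n.*2, size t) := \matrix_(i, j) (G *m (nth 0 t j)^T) i 0.
have [y [ynz hy]] : exists y : V, y != 0 /\ y *m M = 0.
  apply: ker_nz; apply: leq_ltn_trans (rank_leq_col M) _.
  by rewrite size_cat size_map addnn ltn_double.
have hyt : forall j, (j < size t)%N -> g y (nth 0 t j) = 0.
  move=> j hj; have e : g y (nth 0 t j) = (y *m M) 0 (Ordinal hj).
    by rewrite /ip -mulmxA !mxE; apply: eq_bigr => k _; rewrite /M mxE.
  by rewrite e hy mxE.
have g1 : forall j, (j < size s)%N -> g y (nth 0 s j) = 0.
  move=> j hj; have := hyt j; rewrite /t nth_cat hj size_cat; apply.
  exact: leq_trans hj (leq_addr _ _).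
have g2 : forall j, (j < size s)%N -> g y (nth 0 s j *m J) = 0.
  move=> j hj; have := hyt (size s + j)%N.
  rewrite /t nth_cat (ltnNge (size s + j) (size s)) leq_addr /= addKn (nth_map 0) // size_cat size_map ltn_add2l.
  by apply.
have [c hc] := normalize _ ynz.
exists (c *: y) => i j; rewrite size_rcons !ltnS.
rewrite leq_eqVlt => /orP[/eqP->|hi]; rewrite leq_eqVlt => /orP[/eqP->|hj];
  rewrite !nth_rcons ?ltnn ?eqxx ?hi ?hj.
- by rewrite mul1r hc gxJx.
- rewrite (gtn_eqF hj) mul0r !ipZl g1 // g2 // !mulr0.
  by split.
- rewrite (ltn_eqF hi) mul0r -scalemxAl !gZr; split.
    by rewrite gC g1 // mulr0.
  by rewrite gJr gC g2 // oppr0 mulr0.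
- exact: os.
Qed.

Lemma onb_exists : (0 < n)%N -> exists X0 : V,
  [/\ forall z, (z <= H)%MS -> g z X0 = 0, forall z, g z X0 = 0 -> (z <= H)%MS
    & exists s, [/\ size s = n, onb s & nth 0 s 0 = X0]].
Proof.
move=> n0; have [X0 [hXX h1 h2]] := normal_vec n0.
exists X0; split => //.
suff : forall k, (0 < k <= n)%N -> exists s, [/\ size s = k, onb s & nth 0 s 0 = X0].
  by apply; rewrite n0 leqnn.
elim=> // k IH /andP [_ kn].
have [k0|kpos] := posnP k.
  subst k; exists [:: X0]; split => //.
  move=> i j; rewrite /= !ltnS !leqn0 => /eqP-> /eqP->; rewrite hXX mul1r gxJx.
  by split.
have [s [ss os s0]] := IH (introT andP (conj kpos (ltnW kn))).
have ss' : (size s < n)%N by rewrite ss.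
have [x ox] := onb_ext _ os ss'.
exists (rcons s x); split => //; first by rewrite size_rcons ss.
by rewrite nth_rcons ss kpos.
Qed.

Lemma eBG m1 m2 (A : 'M[R]_(m1, n.*2)) (C : 'M[R]_(m2, n.*2)) i j :
  (A *m G *m C^T) i j = g (row i A) (row j C).
Proof. by rewrite /ip !mxE; apply: eq_bigr => k _; rewrite -row_mul !mxE. Qed.

Lemma expand s : size s = n -> onb s -> forall x : V,
  x = \sum_(j < n) ((2 * g x (nth 0 s j)) *: nth 0 s j
                    + (2 * g x (nth 0 s j *m J)) *: (nth 0 s j *m J)).
Proof.
move=> ss os x.
pose bv (i : 'I_(n + n)) : V :=
  match split i with inl j => nth 0 s j | inr j => nth 0 s j *m J end.
pose B : 'M[R]_(n + n, n.*2) := \matrix_(i < n + n) bv i.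
have rowB i : row i B = bv i by rewrite rowK.
have sl j : split (lshift n j) = inl j by exact: (unsplitK (inl _ j)).
have sr j : split (rshift n j) = inr j by exact: (unsplitK (inr _ j)).
have oj (j : 'I_n) : (j < size s)%N by rewrite ss.
have BGB : B *m G *m B^T = (2^-1 : R)%:M.
  apply/matrixP => i j; rewrite eBG !rowB [RHS]mxE.
  rewrite -(splitK i) -(splitK j) (inj_eq (can_inj unsplitK)) /bv !unsplitK.
  case: (split i) => a; case: (split j) => b /=.
  - have [-> _] := os a b (oj a) (oj b).
    case: (eqVneq a b) => [->|hab]; first by rewrite !eqxx mul1r mulr1n.
    rewrite (_ : (a == b :> nat) = false); last exact: negbTE hab.
    by rewrite mul0r; case: eqP => // -[] /eqP; rewrite (negbTE hab).
  - by have [_ ->] := os a b (oj a) (oj b).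
  - by rewrite gC; have [_ ->] := os b a (oj b) (oj a).
  - rewrite GJ; have [-> _] := os a b (oj a) (oj b).
    case: (eqVneq a b) => [->|hab]; first by rewrite !eqxx mul1r mulr1n.
    rewrite (_ : (a == b :> nat) = false); last exact: negbTE hab.
    by rewrite mul0r; case: eqP => // -[] /eqP; rewrite (negbTE hab).
have rB : row_full B.
  rewrite /row_full eqn_leq rank_leq_col /=.
  apply: (@leq_trans (n + n)); first by rewrite addnn.
  have h1 : B *m G *m B^T *m (2%:R : R)%:M = 1%:M.
    by rewrite BGB -scalar_mxM mulVf ?pnatr_eq0.
  have := mxrankM_maxl (B *m G *m B^T) (2%:R : R)%:M; rewrite h1 mxrank1 => h2.
  apply: (leq_trans h2); apply: (leq_trans (mxrankM_maxl _ _)).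
  exact: mxrankM_maxl.
have /submxP [w hw] : (x <= B)%MS by apply: submx_full.
have hw2 : x *m G *m B^T = 2^-1 *: w.
  by rewrite hw -!mulmxA [B *m _]mulmxA BGB mul_mx_scalar.
have wE : w = 2 *: (x *m G *m B^T) by rewrite hw2 scalerA mulfV ?pnatr_eq0 // scale1r.
rewrite {1}hw mulmx_sum_row big_split_ord /= -big_split /=.
have wi i : w 0 i = 2 * g x (bv i) by rewrite wE [LHS]mxE eBG rowB row_id.
by apply: eq_bigr => j _; rewrite !rowB !wi /bv sl sr.
Qed.

Definition mkform (u : V) : 'cV[R[i]]_(n.*2) :=
  \col_k (((G *m u^T) k 0)%:C + 'i * ((G *m (u *m J)^T) k 0)%:C).

Lemma gE (x u : V) : g x u = \sum_k x 0 k * (G *m u^T) k 0.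
Proof. by rewrite /ip -mulmxA [LHS]mxE. Qed.

Lemma evf_mk u x : evf (mkform u) x = (g x u)%:C + 'i * (g x (u *m J))%:C.
Proof.
rewrite /evf !gE !rmorph_sum mulr_sumr -big_split /=; apply: eq_bigr => k _.
by rewrite mxE !rmorphM /= mulrDr mulrCA.
Qed.

Lemma evf_conj (phi : 'cV[R[i]]_(n.*2)) (x : V) : evf (conjf phi) x = (evf phi x)^*.
Proof.
rewrite /evf rmorph_sum; apply: eq_bigr => k _.
rewrite mxE rmorphM /=; congr (_ * _).
by apply/eqP; rewrite eq_complex /= oppr0 !eqxx.
Qed.

Lemma evfD (phi psi : 'cV[R[i]]_(n.*2)) (x : V) : evf (phi + psi) x = evf phi x + evf psi x.
Proof. by rewrite /evf -big_split; apply: eq_bigr => k _; rewrite mxE mulrDr. Qed.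

Lemma mk_lin u a x y : evf (mkform u) (a *: x + y) = a%:C * evf (mkform u) x + evf (mkform u) y.
Proof. by rewrite !evf_mk !ipDl !ipZl !rmorphD !rmorphM /=; ring. Qed.
Lemma mk_sum u m (f : 'I_m -> V) : evf (mkform u) (\sum_j f j) = \sum_j evf (mkform u) (f j).
Proof.
elim/big_rec2: _ => [|j y1 y2 _ <-].
  by rewrite evf_mk !ip0l rmorph0 mulr0 addr0.
by rewrite -[f j]scale1r mk_lin scale1r mul1r.
Qed.
Lemma mk_J u x : evf (mkform u) (x *m J) = 'i * evf (mkform u) x.
Proof.
rewrite !evf_mk GJ gJl rmorphN mulrDr mulrA -expr2 sqr_i /=; ring.
Qed.

Lemma mk_Z u a x : evf (mkform u) (a *: x) = a%:C * evf (mkform u) x.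
Proof. by rewrite !evf_mk !ipZl !rmorphM /=; ring. Qed.
Lemma mk_D u x y : evf (mkform u) (x + y) = evf (mkform u) x + evf (mkform u) y.
Proof. by rewrite !evf_mk !ipDl !rmorphD /=; ring. Qed.
Lemma mk_B u x y : evf (mkform u) (x - y) = evf (mkform u) x - evf (mkform u) y.
Proof. by rewrite !evf_mk !ipDl !ipNl !rmorphD !rmorphN /=; ring. Qed.

Lemma main_sec : (0 < n)%N ->
  exists (phi : 'I_n -> 'cV[R[i]]_(n.*2)) (lambda : R)
         (v : 'I_n -> R[i]) (A : 'M[R[i]]_n),
    unitary_coframe J G phi /\
    forall i0 : 'I_n, nat_of_ord i0 = 0%N ->
      (forall x y, dform br (phi i0) x y
                   = - lambda%:C * wedge (phi i0) (conjf (phi i0)) x y) /\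
      (forall i : 'I_n, (0 < i)%N -> forall x y,
         dform br (phi i) x y
         = - (v i)^* * wedge (phi i0) (conjf (phi i0)) x y
           + \sum_(j < n | (0 < j)%N)
               (A i j)^* * wedge (phi i0 + conjf (phi i0)) (phi j) x y).
Proof.
move=> n0.
have [X0 [hH1 hH2 [s [ss os s0]]]] := onb_exists n0.
pose i0 : 'I_n := Ordinal n0.
pose X (j : 'I_n) := nth 0 s j.
have oj (j : 'I_n) : (j < size s)%N by rewrite ss.
have oX a b : g (X a) (X b) = (a == b)%:R / 2 /\ g (X a) (X b *m J) = 0.
  exact: os a b (oj a) (oj b).
have X0E : X i0 = X0 by [].
pose phi j := mkform (X j).
pose F (k : 'I_n) := evf (phi k) (br X0 (X0 *m J)).
pose Gk (k j : 'I_n) := evf (phi k) (br X0 (X j)).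
pose c := g (br X0 (X0 *m J)) (X0 *m J).
exists phi, (-2 * c), (fun k => (2%:R * 'i * F k)^*), (\matrix_(k, j) (-2%:R * Gk k j)^*).
split.
  split; first by move=> i x; apply: mk_J.
  exists X; split.
    move=> a b; rewrite /ipC /vec10 /vec01 /=.
    rewrite !ipNl GJ gJl !opprK; have [h1 h2] := oX a b; rewrite h2 h1.
    by case: (a == b); apply/eqP; rewrite eq_complex /=; apply/andP; split; apply/eqP; field.
  move=> a b; rewrite /evfC /vec10 /= !evf_mk ipNl ipNl GJ gJl opprK.
  have [h1 h2] := oX b a; rewrite h2 h1 eq_sym.
  by case: (a == b); apply/eqP; rewrite eq_complex /=; rewrite ?eqxx //=; apply/andP; split; apply/eqP; field.
move=> i0' hi0; have -> : i0' = i0 by apply: val_inj.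
have gX0 : g X0 X0 = 2^-1 by have [h _] := oX i0 i0; rewrite -X0E h eqxx mul1r.
have gX0J : g X0 (X0 *m J) = 0 by apply: gxJx.
have hXH j : j != i0 -> (X j <= H)%MS /\ (X j *m J <= H)%MS.
  move=> hj; split; apply: hH2.
    by have [h _] := oX j i0; rewrite -X0E h (negbTE hj) mul0r.
  by rewrite gJl; have [_ h] := oX j i0; rewrite -X0E h oppr0.
have hX0J : (X0 *m J <= H)%MS by apply: hH2; rewrite gJl gX0J oppr0.
have DH z : (z <= H)%MS -> g (br X0 z) X0 = 0.
  by move=> hz; rewrite brA ipNl hH1 ?oppr0 // Hid.
have RJ j : j != i0 -> br X0 (X j *m J) = br X0 (X j) *m J.
  move=> hj; have [h1 h2] := hXH j hj.
  have := NJ X0 (X j); rewrite (Hab _ _ hX0J h2) (Hab _ _ hX0J h1) mul0mx subr0 addr0.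
  move=> /(congr1 (fun z => z *m J)); rewrite mulmxDl mul0mx JJx.
  by move=> /eqP; rewrite addr_eq0 opprK => /eqP ->.
have pH x : (x - (2 * g x X0) *: X0 <= H)%MS.
  by apply: hH2; rewrite ipDl ipNl ipZl gX0; field.
have brdec x y : br x y = (2 * g x X0) *: br X0 (y - (2 * g y X0) *: X0)
                         - (2 * g y X0) *: br X0 (x - (2 * g x X0) *: X0).
  have dec z : z = (2 * g z X0) *: X0 + (z - (2 * g z X0) *: X0) by rewrite addrC subrK.
  rewrite {1}(dec x) {1}(dec y).
  move: (pH x) (pH y); move: (x - (2 * g x X0) *: X0) (y - (2 * g y X0) *: X0) => p q hp hq.
  move: (2 * g x X0) (2 * g y X0) => a b.
  rewrite brL !brDr !brZr brxx scaler0 add0r (Hab _ _ hp hq) addr0 (brA p X0) scalerN.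
  by [].
have gdec x : g (x - (2 * g x X0) *: X0) (X0 *m J) = g x (X0 *m J).
  by rewrite ipDl ipNl ipZl gX0J mulr0 subr0.
have fdec j x : j != i0 -> evf (phi j) (x - (2 * g x X0) *: X0) = evf (phi j) x.
  move=> hj; rewrite mk_B mk_Z !evf_mk.
  have [h1 h2] := oX i0 j; rewrite X0E in h1 h2; rewrite h1 h2 eq_sym (negbTE hj).
  by rewrite mul0r rmorph0 mulr0 addr0 mulr0 subr0.
have fDp k p : (p <= H)%MS -> evf (phi k) (br X0 p) =
   (2 * g p (X0 *m J))%:C * F k + \sum_(j | j != i0) (2%:R * evf (phi j) p) * Gk k j.
  move=> hp; rewrite {1}(expand _ ss os p) br_sumr mk_sum (bigD1 i0) //=.
  congr (_ + _).
    rewrite s0 hH1 // mulr0 scale0r add0r brZr mk_Z.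
    by rewrite /F.
  apply: eq_bigr => j hj; rewrite brDr !brZr mk_D !mk_Z.
  have RJ' := RJ j hj; rewrite /X in RJ'; rewrite RJ' mk_J.
  rewrite /Gk /phi /X !evf_mk !rmorphM /= rmorph_nat; ring.
have sumE (f : 'I_n -> R[i]) : \sum_(j < n | (0 < j)%N) f j = \sum_(j | j != i0) f j.
  by apply: eq_bigl => j; rewrite lt0n.
split.
  move=> x y; rewrite /dform brdec mk_B !mk_Z !fDp ?pH // !gdec.
  have G0 j : j != i0 -> Gk i0 j = 0.
    move=> hj; rewrite /Gk /phi X0E evf_mk DH ?(hXH j hj).1 // gJr.
    have RJ' := RJ j hj; rewrite -RJ' DH ?(hXH j hj).2 //.
    by rewrite oppr0 rmorph0 mulr0 addr0.
  rewrite !big1 ?addr0; try by move=> j hj; rewrite G0 ?mulr0.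
  rewrite /F /phi X0E evf_mk DH // -/c /wedge !evf_conj !evf_mk.
  rewrite -!complexr0 /=; simpc; apply/eqP; rewrite eq_complex /=; apply/andP; split; apply/eqP; ring.
move=> k k0 x y.
rewrite /dform brdec mk_B !mk_Z !fDp ?pH // !gdec sumE.
have -> : \sum_(j | j != i0) ((\matrix_(k0, j0) (-2%:R * Gk k0 j0)^*) k j)^*
              * wedge (phi i0 + conjf (phi i0)) (phi j) x y
   = evf (phi i0 + conjf (phi i0)) y * \sum_(j | j != i0) (2%:R * evf (phi j) x) * Gk k j
     - evf (phi i0 + conjf (phi i0)) x * \sum_(j | j != i0) (2%:R * evf (phi j) y) * Gk k j.
  rewrite !mulr_sumr -sumrB; apply: eq_bigr => j _; rewrite mxE conjCK /wedge; ring.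
rewrite !(eq_bigr _ (fun j hj => congr1 (fun z => (2%:R * z) * Gk k j) (fdec j _ hj))).
rewrite evfD evfD !evf_conj /wedge !evf_conj /phi X0E !evf_mk conjCK.
move: (F k) (\sum_(j | j != i0) (2%:R * evf (mkform (X j)) x) * Gk k j)
      (\sum_(j | j != i0) (2%:R * evf (mkform (X j)) y) * Gk k j) => [F1 F2] [S1 S2] [T1 T2].
rewrite -!complexr0 /=; simpc; apply/eqP; rewrite eq_complex /=; apply/andP; split; apply/eqP; ring.
Qed.

End Main.

Theorem lemma5 (R : realType) (n : nat)
  (br : 'rV[R]_(n.*2) -> 'rV[R]_(n.*2) -> 'rV[R]_(n.*2))
  (J G : 'M[R]_(n.*2)) :
  is_lie_bracket br -> almost_abelian br -> hermitian_structure br J G ->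
  exists (phi : 'I_n -> 'cV[R[i]]_(n.*2)) (lambda : R)
         (v : 'I_n -> R[i]) (A : 'M[R[i]]_n),
    unitary_coframe J G phi /\
    forall i0 : 'I_n, nat_of_ord i0 = 0%N ->
      (forall x y, dform br (phi i0) x y
                   = - lambda%:C * wedge (phi i0) (conjf (phi i0)) x y) /\
      (forall i : 'I_n, (0 < i)%N -> forall x y,
         dform br (phi i) x y
         = - (v i)^* * wedge (phi i0) (conjf (phi i0)) x y
           + \sum_(j < n | (0 < j)%N)
               (A i j)^* * wedge (phi i0 + conjf (phi i0)) (phi j) x y).
Proof.
move=> [brL brA _] [[x [y nz]] [H [Hrank Hid Hab]]] [[JJ NJ] Gs Gpos GJ].
have n0 : (0 < n)%N.
  rewrite lt0n; apply/negP => /eqP n0; subst n.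
  by move/eqP: nz; apply; apply: thinmx0.
by eapply main_sec; eassumption.
Qed.
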